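(* Let $n,r\geq1$, $\epsilon>0$, and let $t\mapsto(x_1(t),\ldots,x_r(t))$ be a continuous map $[0,\epsilon)\to(\mathbb R^n)^r$. For $I\subseteq\{1,\ldots,r\}$ and $t\in[0,\epsilon)$, let $F_I(t)$ be the convex hull of $\{x_i(t): i\in I\}$, and $P(t)=F_{\{1,\ldots,r\}}(t)$. Assume that for every $t\in(0,\epsilon)$ the points $x_i(t)$ are pairwise distinct vertices of $P(t)$, and that whenever $F_I(t)$ is a face of $P(t)$ of dimension $k$ for some $t\in(0,\epsilon)$, then $F_I(t)$ is a face of $P(t)$ of dimension $k$ for all $t\in(0,\epsilon)$. Let $I$ be such that $F(t):=F_I(t)$ is a face of $P(t)$ for all $t\in(0,\epsilon)$. Then every proper face of $F(0)$ is contained in the union of the sets $F_K(0)$, over all $K$ such that $F_K(t)$ is a proper face of $F(t)$ for $t\in(0,\epsilon)$. *)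

(* Defs.v *)
From HB Require Import structures.
From mathcomp Require Import all_boot all_order all_algebra.
From mathcomp Require Import all_classical all_reals all_analysis.
Set Implicit Arguments. Unset Strict Implicit. Unset Printing Implicit Defensive.
Import Order.TTheory GRing.Theory Num.Theory.
Import numFieldNormedType.Exports.
Local Open Scope classical_set_scope.
Local Open Scope ring_scope.

Definition dotv (R : realType) (n : nat) (a x : 'rV[R]_n) : R :=
  \sum_(j < n) a ord0 j * x ord0 j.

(* convex hull of the points { row i M | i in I } (rows of M = points of R^n) *)
Definition convI (R : realType) (r n : nat) (I : {set 'I_r}) (M : 'M[R]_(r, n))
  : set 'rV[R]_n :=
  [set y | exists w : 'I_r -> R,
      [/\ forall i, 0 <= w i,
          forall i, i \notin I -> w i = 0,
          \sum_(i < r) w i = 1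
        & y = \sum_(i < r) w i *: row i M]].

(* F is a face of the convex set P: F = P ∩ H for a hyperplane
   H = {x | <a,x> = b} with P ⊆ {x | <a,x> <= b}.  (a = 0 allowed, so P and
   the empty set are faces.) *)
Definition is_face (R : realType) (n : nat) (F P : set 'rV[R]_n) : Prop :=
  exists (a : 'rV[R]_n) (b : R),
    (forall x, P x -> dotv a x <= b) /\
    F = P `&` [set x | dotv a x = b].

Definition is_proper_face (R : realType) (n : nat) (F P : set 'rV[R]_n) : Prop :=
  is_face F P /\ F <> P.

Definition is_vertex (R : realType) (n : nat) (v : 'rV[R]_n) (P : set 'rV[R]_n) : Prop :=
  is_face [set v] P.

Definition aff_indep (R : realType) (n k : nat) (p : 'I_k.+1 -> 'rV[R]_n) : bool :=
  row_free (\matrix_(i < k) (p (lift ord0 i) - p ord0)).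

Definition has_dim (R : realType) (n : nat) (S : set 'rV[R]_n) (k : nat) : Prop :=
  (exists p : 'I_k.+1 -> 'rV[R]_n, (forall i, S (p i)) /\ aff_indep p) /\
  ~ (exists p : 'I_k.+2 -> 'rV[R]_n, (forall i, S (p i)) /\ aff_indep p).

(* Main.v *)
Require Import Defs.
From HB Require Import structures.
From mathcomp Require Import all_boot all_order all_algebra.
From mathcomp Require Import all_classical all_reals all_analysis.
From mathcomp Require Import ring lra.
Import Order.TTheory GRing.Theory Num.Theory.
Import numFieldNormedType.Exports.
Local Open Scope classical_set_scope.
Local Open Scope ring_scope.
Set Implicit Arguments. Unset Strict Implicit. Unset Printing Implicit Defensive.

Section Alg.
Variables (R : realType) (n r : nat).
Implicit Types (a b u v : 'rV[R]_n) (M : 'M[R]_(r, n)) (w : 'I_r -> R).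

Lemma dotv_sum a w M : dotv a (\sum_i w i *: row i M) = \sum_i w i * dotv a (row i M).
Proof.
rewrite /dotv.
under eq_bigr do rewrite summxE mulr_sumr.
rewrite exchange_big /=; apply: eq_bigr => i _; rewrite mulr_sumr.
by apply: eq_bigr => j _; rewrite !mxE mulrCA.
Qed.

Lemma dotvDl a b u : dotv (a + b) u = dotv a u + dotv b u.
Proof. by rewrite /dotv -big_split /=; apply: eq_bigr => j _; rewrite mxE mulrDl. Qed.
Lemma dotvDr a u v : dotv a (u + v) = dotv a u + dotv a v.
Proof. by rewrite /dotv -big_split /=; apply: eq_bigr => j _; rewrite mxE mulrDr. Qed.
Lemma dotvZl k a u : dotv (k *: a) u = k * dotv a u.
Proof. by rewrite /dotv mulr_sumr; apply: eq_bigr => j _; rewrite mxE mulrA. Qed.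
Lemma dotvZr k a u : dotv a (k *: u) = k * dotv a u.
Proof. by rewrite /dotv mulr_sumr; apply: eq_bigr => j _; rewrite mxE mulrCA. Qed.
Lemma dotvNr a u : dotv a (- u) = - dotv a u.
Proof. by rewrite /dotv -sumrN; apply: eq_bigr => j _; rewrite mxE mulrN. Qed.
Lemma dotvNl a u : dotv (- a) u = - dotv a u.
Proof. by rewrite /dotv -sumrN; apply: eq_bigr => j _; rewrite mxE mulNr. Qed.
Lemma dotvBr a u v : dotv a (u - v) = dotv a u - dotv a v.
Proof. by rewrite dotvDr dotvNr. Qed.
Lemma dotvBl a b u : dotv (a - b) u = dotv a u - dotv b u.
Proof. by rewrite dotvDl dotvNl. Qed.
Lemma dotvC a u : dotv a u = dotv u a.
Proof. by rewrite /dotv; apply: eq_bigr => j _; rewrite mulrC. Qed.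
Lemma dotv_ge0 u : 0 <= dotv u u.
Proof. by rewrite /dotv; apply: sumr_ge0 => j _; rewrite -expr2 sqr_ge0. Qed.
Lemma dotv_eq0 u : dotv u u = 0 -> u = 0.
Proof.
move=> /eqP; rewrite /dotv psumr_eq0; last by move=> j _; rewrite -expr2 sqr_ge0.
move=> /allP H; apply/rowP => j; rewrite mxE.
have := H j (mem_index_enum _); rewrite -expr2 sqrf_eq0 => /eqP.
by rewrite (ord1 ord0).
Qed.


Lemma row_in_conv (J : {set 'I_r}) M i : i \in J -> convI J M (row i M).
Proof.
move=> iJ; exists (fun k => (k == i)%:R); split.
- by move=> k; rewrite ler0n.
- by move=> k kJ; case: eqP kJ => // -> ; rewrite iJ.
- by rewrite (bigD1 i) //= eqxx big1 ?addr0 // => k /negbTE ->.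
- by rewrite (bigD1 i) //= eqxx scale1r big1 ?addr0 // => k /negbTE ->; rewrite scale0r.
Qed.

Lemma convI_sub (J J' : {set 'I_r}) M : J \subset J' -> convI J M `<=` convI J' M.
Proof.
move=> sJ v [w [w0 wJ w1 ->]]; exists w; split => // i iJ'.
by apply: wJ; apply: contra iJ' => /(fintype.subsetP sJ).
Qed.

Lemma convI_argmax (J : {set 'I_r}) M f (be : R) :
  (forall i, i \in J -> dotv f (row i M) <= be) ->
  (forall v, convI J M v -> dotv f v <= be) /\
  convI [set i in J | dotv f (row i M) == be] M = convI J M `&` [set v | dotv f v = be].
Proof.
move=> H; split.
  move=> v [w [w0 wJ w1 ->]]; rewrite dotv_sum.
  rewrite -[be]mul1r -w1 mulr_suml; apply: ler_sum => i _.
  case: (boolP (i \in J)) => iJ; first by rewrite ler_wpM2l // H.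
  by rewrite wJ // !mul0r.
apply/seteqP; split.
  move=> v [w [w0 wJ w1 ->]]; split.
    exists w; split => // i iJ; apply: wJ; rewrite inE negb_and iJ //.
  rewrite /= dotv_sum -[be]mul1r -w1 mulr_suml; apply: eq_bigr => i _.
  case: (boolP (i \in [set i in J | dotv f (row i M) == be])) => iK.
    by move: iK; rewrite inE => /andP [_ /eqP ->].
  by rewrite wJ // !mul0r.
move=> v [[w [w0 wJ w1 vE]] /= fv].
exists w; split => // i iK.
have E : \sum_(k < r) w k * (be - dotv f (row k M)) = 0.
  rewrite (eq_bigr (fun k => w k * be - w k * dotv f (row k M))); last first.
    by move=> k _; rewrite mulrBr.
  by rewrite sumrB -mulr_suml w1 mul1r -dotv_sum -vE fv subrr.
have T0 k : 0 <= w k * (be - dotv f (row k M)).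
  case: (boolP (k \in J)) => kJ; last by rewrite wJ // mul0r.
  by rewrite mulr_ge0 // subr_ge0 H.
move/eqP: E; rewrite psumr_eq0; last by move=> k _; exact: T0.
move=> /allP /(_ i (mem_index_enum _)) /=; rewrite mulf_eq0 => /orP [/eqP //|].
rewrite subr_eq0 => /eqP Hi; move: iK; rewrite inE -Hi eqxx andbT.
by move/wJ.
Qed.

Lemma convI_convex (J : {set 'I_r}) M u v (s : R) : 0 <= s <= 1 ->
  convI J M u -> convI J M v -> convI J M (u + s *: (v - u)).
Proof.
move=> /andP [s0 s1] [w [w0 wJ w1 ->]] [w' [w0' wJ' w1' ->]].
exists (fun i => (1 - s) * w i + s * w' i); split.
- by move=> i; rewrite addr_ge0 // mulr_ge0 // subr_ge0.
- by move=> i iJ; rewrite wJ // wJ' // !mulr0 addr0.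
- by rewrite big_split /= -!mulr_sumr w1 w1' !mulr1 subrK.
rewrite scalerBr !scaler_sumr -sumrB -big_split /=; apply: eq_bigr => i _.
rewrite !scalerA scalerDl mulrBl mul1r scalerBl.
by rewrite -addrA [X in _ + X]addrC.
Qed.

Lemma convI_nonempty (J : {set 'I_r}) M v : convI J M v -> exists i, i \in J.
Proof.
move=> [w [w0 wJ w1 _]]; apply/existsP; apply: contraLR isT => /existsPn H.
have : \sum_(i < r) w i = 0 by apply: big1 => i _; apply: wJ; exact: H.
by rewrite w1 => /eqP; rewrite oner_eq0.
Qed.


Lemma cont_sum (T : topologicalType) m (g : 'I_m -> T -> R) :
  (forall i, continuous (g i)) -> continuous (fun y => \sum_(i < m) g i y).
Proof.
move=> H; apply: continuous_big => //; exact: add_continuous.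
Qed.

Lemma contM (T : topologicalType) (f g : T -> R) :
  continuous f -> continuous g -> continuous (fun x => f x * g x).
Proof. move=> cf cg x; apply: cvgM; [exact: cf | exact: cg]. Qed.
Lemma contB (T : topologicalType) (f g : T -> R) :
  continuous f -> continuous g -> continuous (fun x => f x - g x).
Proof. move=> cf cg x; apply: cvgB; [exact: cf | exact: cg]. Qed.
Lemma contC (T : topologicalType) (c : R) :
  continuous (fun _ : T => c).
Proof. move=> x; exact: cvg_cst. Qed.

Lemma nearest (J : {set 'I_r}) M z : (exists i, i \in J) ->
  exists2 p, convI J M p &
    forall v, convI J M v -> dotv (z - p) (z - p) <= dotv (z - v) (z - v).
Proof.
move=> [i0 i0J].
pose S := (\bigcap_(i in setT) [set q : 'rV[R]_r | 0 <= q ord0 i]) `&`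
   (\bigcap_(i in setT) [set q : 'rV[R]_r | q ord0 i * (i \notin J)%:R = 0]) `&`
   [set q : 'rV[R]_r | \sum_(i < r) q ord0 i = 1].
pose lin (q : 'rV[R]_r) := \sum_(i < r) q ord0 i *: row i M.
pose f (q : 'rV[R]_r) := \sum_(j < n) (z ord0 j - \sum_(i < r) q ord0 i * M i j) *
                                       (z ord0 j - \sum_(i < r) q ord0 i * M i j).
have fE q : f q = dotv (z - lin q) (z - lin q).
  rewrite /f /dotv; apply: eq_bigr => j _; rewrite !mxE summxE.
  by congr (( _ - _) * (_ - _)); apply: eq_bigr => i _; rewrite !mxE.
have coordc (i : 'I_r) : continuous (fun q : 'rV[R]_r => q ord0 i).
  exact: coord_continuous.
have S0 : S !=set0.
  exists (\row_k (k == i0)%:R); split; [split|].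
  - by move=> i _ /=; rewrite mxE ler0n.
  - move=> i _ /=; rewrite mxE; case: eqP => [->|]; first by rewrite i0J mulr0.
    by rewrite mul0r.
  - rewrite /= (bigD1 i0) //= mxE eqxx big1 ?addr0 // => k /negbTE kn.
    by rewrite mxE kn.
have Scl : closed S.
  apply: closedI; first apply: closedI.
  - apply: closed_bigI => i _.
    exact: (@preimage_closed _ R^o (fun q : 'rV[R]_r => q ord0 i) [set x | 0 <= x]
             (fun q _ => coordc i q) (@closed_ge _ 0)).
  - apply: closed_bigI => i _.
    apply: (@preimage_closed _ R^o (fun q : 'rV[R]_r => q ord0 i * (i \notin J)%:R)
             [set x | x = 0] _ (@closed_eq _ 0)).
    move=> q _; apply: contM; [exact: coordc | exact: contC].
  - apply: (@preimage_closed _ R^o (fun q : 'rV[R]_r => \sum_(i < r) q ord0 i)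
             [set x | x = 1] _ (@closed_eq _ 1)).
    by move=> q _; apply: cont_sum => i; exact: coordc.
have Scp : compact S.
  apply: (subclosed_compact Scl (@rV_compact _ r (fun _ => `[(0:R), 1]%classic) (fun _ => @segment_compact _ 0 1))).
  move=> q [[/= q0 _] q1] i /=; rewrite in_itv /= q0 //=.
  rewrite -q1 (bigD1 i) //= lerDl; apply: sumr_ge0 => k _; exact: q0.
have fc : continuous f.
  apply: cont_sum => j.
  have g : continuous (fun q : 'rV[R]_r => z ord0 j - \sum_(i < r) q ord0 i * M i j).
    apply: contB; first exact: contC.
    apply: cont_sum => i; apply: contM; [exact: coordc| exact: contC].
  by apply: contM; apply: g.
have [c cS cmin] := EVT_min_rV S0 Scp (continuous_subspaceT fc).
move: cS; rewrite inE => -[[/= c0 cJ] c1].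
have cJ' i : i \notin J -> c ord0 i = 0.
  by move=> iJ; have := cJ i I; rewrite iJ /= mulr1.
exists (lin c).
  by exists (fun i => c ord0 i); split => //; move=> i; exact: c0.
move=> v [w [w0 wJ w1 ->]].
have Sw : S (\row_i w i).
  split; [split|].
  - by move=> i _ /=; rewrite mxE w0.
  - by move=> i _ /=; rewrite mxE; case: (boolP (i \in J)) => iJ; rewrite ?mulr0 // wJ // mul0r.
  - by rewrite /= -w1; apply: eq_bigr => i _; rewrite mxE.
have := cmin _ (mem_set Sw); rewrite !fE.
have -> : lin (\row_i w i) = \sum_(i < r) w i *: row i M.
  by apply: eq_bigr => i _; rewrite mxE.
by [].
Qed.

Lemma dotv_expand a b (s : R) :
  dotv (a - s *: b) (a - s *: b) = dotv a a - 2 * s * dotv a b + s ^+ 2 * dotv b b.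
Proof.
rewrite !dotvBl !dotvBr !dotvZl !dotvZr (dotvC b a).
by rewrite expr2 mulrA; rewrite -[2]/(1 + 1) !mulrDl !mul1r; rewrite !opprD !addrA opprK; 
  congr (_ + _); rewrite -!addrA; congr (_ + _); rewrite addrC.
Qed.

Lemma nearest_var (J : {set 'I_r}) M z p : convI J M p ->
  (forall v, convI J M v -> dotv (z - p) (z - p) <= dotv (z - v) (z - v)) ->
  forall v, convI J M v -> dotv (z - p) (v - p) <= 0.
Proof.
move=> Jp Hmin v Jv; rewrite leNgt; apply/negP => A0.
set A := dotv (z - p) (v - p) in A0 *.
set B := dotv (v - p) (v - p).
have B0 : 0 <= B by exact: dotv_ge0.
set s := A / (A + B).
have AB0 : 0 < A + B by rewrite ltr_pwDl.
have s0 : 0 < s by rewrite divr_gt0.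
have s1 : s <= 1 by rewrite ler_pdivrMr // mul1r lerDl.
have sI : 0 <= s <= 1 by rewrite s1 ltW.
have := Hmin (p + s *: (v - p)) (convI_convex sI Jp Jv).
have -> : z - (p + s *: (v - p)) = (z - p) - s *: (v - p) by rewrite opprD addrA.
rewrite dotv_expand -/A -/B.
have sB : s * B <= A.
  by rewrite /s mulrAC ler_pdivrMr // ler_pM2l // lerDr ltW.
have sB2 : s * (s * B) <= s * A by rewrite ler_pM2l.
rewrite expr2 -mulrA => H.
have : s * A <= 0 by lra.
by rewrite leNgt mulr_gt0.
Qed.


Lemma vertex_notin M (J : {set 'I_r}) i :
  injective (fun k : 'I_r => row k M) ->
  (forall k, is_vertex (row k M) (convI [set: 'I_r]%SET M)) ->
  i \notin J -> ~ convI J M (row i M).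
Proof.
move=> inj vert iJ Hi.
have [a [b [Hle Heq]]] := vert i.
have Vi : dotv a (row i M) = b.
  have : ([set row i M] : set 'rV[R]_n) (row i M) by [].
  by rewrite Heq => -[].
have lt k : k \in J -> dotv a (row k M) < b.
  move=> kJ; rewrite lt_neqAle Hle ?andbT; last by apply: row_in_conv; rewrite inE.
  apply/eqP => E.
  have : (convI [set: 'I_r]%SET M `&` [set x | dotv a x = b]) (row k M).
    by split => //; apply: row_in_conv; rewrite inE.
  rewrite -Heq /= => /inj ki; by move: iJ; rewrite -ki kJ.
have [_ E] := convI_argmax (be := b) (f := a) (M := M) (J := J) (fun k kJ => ltW (lt k kJ)).
have : (convI J M `&` [set v | dotv a v = b]) (row i M) by split.
rewrite -E => /convI_nonempty [k]; rewrite inE => /andP [kJ /eqP kE].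
by have := lt k kJ; rewrite kE ltxx.
Qed.

Lemma face_restrict (A B P : set 'rV[R]_n) :
  is_face A P -> A `<=` B -> B `<=` P -> is_face A B.
Proof.
move=> [a [b [Hle ->]]] AB BP; exists a, b; split.
  by move=> v /BP /Hle.
apply/seteqP; split => v.
  by move=> H; split; [exact: AB | case: H].
by move=> [/BP Pv Hv]; split.
Qed.

Lemma has_dim_exists (S : set 'rV[R]_n) v : S v -> exists k, has_dim S k.
Proof.
move=> Sv.
pose Q k := exists p : 'I_k.+1 -> 'rV[R]_n, (forall i, S (p i)) /\ aff_indep p.
have Q0 : Q 0%N.
  exists (fun _ => v); split => //; rewrite /aff_indep /row_free.
  by rewrite -leqn0 rank_leq_row.
have Qb k : Q k -> (k <= n)%N.
  move=> [p [_ H]]; move: H; rewrite /aff_indep /row_free => /eqP <-.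
  exact: rank_leq_col.
apply: contrapT => H.
have step k : Q k -> Q k.+1.
  move=> Qk; apply: contrapT => nQ; apply: H; exists k; by split.
have : Q n.+1 by elim: n.+1 => // k IH; apply: step.
by move/Qb; rewrite ltnn.
Qed.


Lemma face_lift M (I : {set 'I_r}) c (be : R) :
  injective (fun k : 'I_r => row k M) ->
  (forall k, is_vertex (row k M) (convI [set: 'I_r]%SET M)) ->
  is_face (convI I M) (convI [set: 'I_r]%SET M) ->
  (forall i, i \in I -> dotv c (row i M) <= be) ->
  is_face (convI [set i in I | dotv c (row i M) == be] M) (convI [set: 'I_r]%SET M).
Proof.
move=> inj vert [a [b [Hle Heq]]] Hc.
have inF i : i \in I -> dotv a (row i M) = b.
  move=> iI; have : convI I M (row i M) by exact: row_in_conv.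
  by rewrite Heq => -[].
have outF i : i \notin I -> dotv a (row i M) < b.
  move=> iI; rewrite lt_neqAle Hle ?andbT; last by apply: row_in_conv; rewrite inE.
  apply/eqP => E; apply: (vertex_notin inj vert iI); rewrite Heq; split => //.
  by apply: row_in_conv; rewrite inE.
pose term i := if i \in I then 0 else `|dotv c (row i M) - be| / (b - dotv a (row i M)).
have term0 i : 0 <= term i.
  rewrite /term; case: ifP => // /negbT iI.
  by rewrite divr_ge0 // subr_ge0 ltW // outF.
pose L := 1 + \sum_(i < r) term i.
have Lt i : term i < L.
  have rest : 0 <= \sum_(k < r | k != i) term k by apply: sumr_ge0 => k _; exact: term0.
  rewrite /L (bigD1 i) //=; lra.
pose f := c + L *: a.
pose lev := be + L * b.
have key i : lev - dotv f (row i M) = (be - dotv c (row i M)) + L * (b - dotv a (row i M)).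
  by rewrite /f /lev dotvDl dotvZl; ring.
have fle i : dotv f (row i M) <= lev.
  rewrite -subr_ge0 key; case: (boolP (i \in I)) => iI.
    by rewrite inF // subrr mulr0 addr0 subr_ge0 Hc.
  have gt : 0 < b - dotv a (row i M) by rewrite subr_gt0 outF.
  have := Lt i; rewrite /term (negbTE iI) ltr_pdivrMr // => H.
  have := ler_norm (dotv c (row i M) - be); lra.
have [_ E] := convI_argmax (be := lev) (f := f) (M := M) (J := [set: 'I_r]%SET) (fun i _ => fle i).
exists f, lev; split; first by move=> v Pv; have [H _] := convI_argmax (be := lev) (f := f) (M := M) (J := [set: 'I_r]%SET) (fun i _ => fle i); exact: H.
rewrite -E; congr convI; apply/setP => i; rewrite !inE /=.
have -> : (dotv f (row i M) == lev) = (lev - dotv f (row i M) == 0).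
  by rewrite subr_eq0 eq_sym.
rewrite key.
case: (boolP (i \in I)) => iI /=.
  rewrite inF // subrr mulr0 addr0 subr_eq0.
  by rewrite eq_sym.
apply/esym/negbTE; apply: lt0r_neq0.
have gt : 0 < b - dotv a (row i M) by rewrite subr_gt0 outF.
have := Lt i; rewrite /term (negbTE iI) ltr_pdivrMr // => H.
have := ler_norm (dotv c (row i M) - be); lra.
Qed.


Lemma coordE w M j : (\sum_(i < r) w i *: row i M) ord0 j = \sum_(i < r) w i * M i j.
Proof. by rewrite summxE; apply: eq_bigr => i _; rewrite !mxE. Qed.

Lemma wsum_bound w (u : 'I_r -> R) (be : R) : (forall i, 0 <= w i) -> \sum_(i < r) w i = 1 ->
  (forall i, `|u i| <= be) -> `|\sum_(i < r) w i * u i| <= be.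
Proof.
move=> w0 w1 ub; apply: le_trans (ler_norm_sum _ _ _) _.
rewrite -[be]mul1r -w1 mulr_suml; apply: ler_sum => i _.
by rewrite normrM ger0_norm // ler_wpM2l.
Qed.

Lemma coord_conv_bound (J : {set 'I_r}) M v (be : R) : convI J M v ->
  (forall i j, `|M i j| <= be) -> forall j, `|v ord0 j| <= be.
Proof.
move=> [w [w0 _ w1 ->]] H j; rewrite coordE; exact: wsum_bound.
Qed.

Lemma shadow (J : {set 'I_r}) M1 M0 v (e : R) : convI J M1 v ->
  (forall i j, `|M1 i j - M0 i j| <= e) ->
  exists2 q, convI J M0 q & forall j, `|(v - q) ord0 j| <= e.
Proof.
move=> [w [w0 wJ w1 ->]] H; exists (\sum_(i < r) w i *: row i M0).
  by exists w.
move=> j; rewrite !mxE !coordE -sumrB.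
under eq_bigr do rewrite -mulrBr.
exact: wsum_bound.
Qed.

Lemma dotv_bound u (be : R) : (forall j, `|u ord0 j| <= be) -> dotv u u <= n%:R * be ^+ 2.
Proof.
move=> H; have -> : n%:R * be ^+ 2 = \sum_(j < n) be ^+ 2 by rewrite sumr_const card_ord mulr_natl.
rewrite /dotv; apply: ler_sum => j _.
rewrite -expr2 -real_normK ?num_real //; apply: lerXn2r => //; rewrite ?nnegrE //.
by apply: le_trans (H j).
Qed.

Lemma dotv_abs a u (be : R) : (forall j, `|u ord0 j| <= be) ->
  `|dotv a u| <= (\sum_(j < n) `|a ord0 j|) * be.
Proof.
move=> H; apply: le_trans (ler_norm_sum _ _ _) _; rewrite mulr_suml.
by apply: ler_sum => j _; rewrite normrM ler_wpM2l.
Qed.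

Lemma dotv_tri u v : dotv (u + v) (u + v) <= 2 * dotv u u + 2 * dotv v v.
Proof.
rewrite /dotv !mulr_sumr -big_split /=; apply: ler_sum => j _; rewrite mxE.
have := sqr_ge0 (u ord0 j - v ord0 j); rewrite !expr2; nra.
Qed.

End Alg.

Lemma fin_unif (R : realType) (T : finType) (P : T -> R -> Prop) :
  (forall k, exists2 d, 0 < d & forall d', 0 < d' -> d' <= d -> P k d') ->
  exists2 d, 0 < d & forall k, P k d.
Proof.
move=> H.
suff [d d0 Hd] : exists2 d, 0 < d & forall k, k \in enum T -> forall d', 0 < d' -> d' <= d -> P k d'.
  by exists d => // k; apply: Hd => //; rewrite mem_enum.
elim: (enum T) => [|k s [d1 d10 H1]]; first by exists 1.
have [d2 d20 H2] := H k.
exists (Num.min d1 d2); first by rewrite lt_min d10 d20.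
move=> k'; rewrite inE => /orP [/eqP -> | ks] d' d'0 d'le.
  by apply: H2 => //; apply: le_trans d'le _; rewrite ge_min lexx orbT.
by apply: H1 => //; apply: le_trans d'le _; rewrite ge_min lexx.
Qed.

Lemma cont0 (R : realType) r n (eps : R) (x : R -> 'M[R]_(r,n)) : 0 < eps ->
  {within `[0, eps[, continuous x} -> forall e, 0 < e ->
  exists2 d, 0 < d & forall t, 0 <= t -> t < d -> t < eps -> forall i j, `|x t i j - x 0 i j| < e.
Proof.
move=> e0 cx e he.
have A0 : `[0, eps[%classic (0 : R) by rewrite /= in_itv /= lexx e0.
have := (proj1 (subspace_continuousP _ _) cx) 0 A0 => /cvg_ball /(_ e he).
rewrite near_withinE => /nbhs_ballP [d d0 H].
exists d => // t t0 td te i j.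
have := H t; rewrite /ball /= sub0r normrN ger0_norm // => /(_ td).
rewrite in_itv /= t0 te => /(_ isT).
move=> [_ /(_ i j)]; rewrite /ball /= -normrN opprB. done.
Qed.

Lemma le_sum_term (R : realType) (T : finType) (F : T -> R) i :
  (forall k, 0 <= F k) -> F i <= \sum_k F k.
Proof.
move=> H; rewrite (bigD1 i) //= lerDl; exact: sumr_ge0.
Qed.

Unset Implicit Arguments.

Theorem lemma6p1 (R : realType) (n r : nat) (eps : R) (x : R -> 'M[R]_(r, n))
  (I : {set 'I_r}) :
  (1 <= n)%N -> (1 <= r)%N -> 0 < eps ->
  {within `[0, eps[, continuous x} ->
  (forall t, 0 < t < eps ->
     injective (fun i : 'I_r => row i (x t)) /\
     (forall i, is_vertex (row i (x t)) (convI [set: 'I_r]%SET (x t)))) ->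
  (forall (J : {set 'I_r}) (k : nat) (t : R), 0 < t < eps ->
     is_face (convI J (x t)) (convI [set: 'I_r]%SET (x t)) -> has_dim (convI J (x t)) k ->
     forall s, 0 < s < eps ->
       is_face (convI J (x s)) (convI [set: 'I_r]%SET (x s)) /\ has_dim (convI J (x s)) k) ->
  (forall t, 0 < t < eps -> is_face (convI I (x t)) (convI [set: 'I_r]%SET (x t))) ->
  forall G : set 'rV[R]_n,
    is_proper_face G (convI I (x 0)) ->
    G `<=` \bigcup_(K in [set K : {set 'I_r} | forall t, 0 < t < eps ->
                            is_proper_face (convI K (x t)) (convI I (x t))])
             convI K (x 0).
Proof.
move=> n1 r1 eps0 cx Hvert Hstab HF G [[a [b [Gle Geq]]] Gne] y Gy.
set Fam := [set K : {set 'I_r} | _].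
pose V t i := row i (x t).
have Gy' := Gy; rewrite Geq in Gy'; case: Gy' => Fy ay.
have aleb i : i \in I -> dotv a (V 0 i) <= b by move=> iI; apply: Gle; exact: row_in_conv.
have [j0 j0I j0lt] : exists2 j0, j0 \in I & dotv a (V 0 j0) < b.
  apply: contrapT => Hn; apply: Gne.
  have [_ E] := convI_argmax (be := b) (f := a) (M := x 0) (J := I) aleb.
  rewrite Geq -E; congr convI; apply/setP => i; rewrite inE.
  case: (boolP (i \in I)) => //= iI; rewrite eq_le aleb //=; rewrite leNgt.
  by apply/negP => lt; apply: Hn; exists i.
set g := b - dotv a (V 0 j0).
have g0 : 0 < g by rewrite subr_gt0.
apply: contrapT => Hno.
pose Nn (u : 'rV[R]_n) := dotv u u.
have [de de0 Hde] : exists2 de, 0 < de & forall K, Fam K -> forall q, convI K (x 0) q -> de <= Nn (y - q).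
  have := @fin_unif R _ (fun K d => Fam K -> forall q, convI K (x 0) q -> d <= Nn (y - q)).
  apply => K.
  have [FK|nFK] := pselect (Fam K); last by exists 1 => // d' _ _ /nFK.
  have [[i iK]|nK] := pselect (exists i, i \in K); last first.
    exists 1 => // d' _ _ _ q /convI_nonempty [i iK]; case: nK; by exists i.
  have [p Kp Hp] := nearest (x 0) y (ex_intro _ i iK).
  exists (Nn (y - p)).
    rewrite lt_neqAle dotv_ge0 andbT; apply/eqP => E.
    have yp : y = p by apply/eqP; rewrite -subr_eq0; apply/eqP/dotv_eq0; exact/esym/E.
    by apply: Hno; exists K => //; rewrite yp.
  move=> d' _ d'le _ q Kq; apply: le_trans d'le _; exact: Hp.
pose C0 := \sum_i \sum_j `|x 0 i j|.
have C0b i j : `|x 0 i j| <= C0.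
  apply: le_trans (le_sum_term (F := fun j => `|x 0 i j|) j _) _ => // .
  by apply: (le_sum_term (F := fun i => \sum_j `|x 0 i j|) i) => k; apply: sumr_ge0.
have C00 : 0 <= C0 by apply: sumr_ge0 => i _; apply: sumr_ge0.
pose Aa := \sum_j `|a ord0 j|.
have Aa0 : 0 <= Aa by apply: sumr_ge0.
pose C1 := 2 * (C0 + 1).
have C10 : 0 <= C1 by rewrite /C1; lra.
pose W0 := n%:R * (2 * (1 + C1) ^+ 2 + 4 * C1 ^+ 2 + 4).
have W00 : 0 <= W0 by rewrite /W0 mulr_ge0 // ?ler0n //; nra.
pose th := Num.min 1 (de / (2 * W0 + 1)).
have W1 : 0 < 2 * W0 + 1 by lra.
have th0 : 0 < th by rewrite lt_min ltr01 divr_gt0.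
have th1 : th <= 1 by rewrite ge_min lexx.
have thW : th * W0 < de.
  have : th <= de / (2 * W0 + 1) by rewrite ge_min lexx orbT.
  rewrite ler_pdivlMr // => H; nra.
pose e := Num.min th (th * g / (8 * Aa + 1)).
have Aa1 : 0 < 8 * Aa + 1 by lra.
have e0 : 0 < e by rewrite lt_min th0 divr_gt0 // mulr_gt0.
have eth : e <= th by rewrite ge_min lexx.
have eAa : 4 * Aa * e < th * g.
  have : e <= th * g / (8 * Aa + 1) by rewrite ge_min lexx orbT.
  rewrite ler_pdivlMr // => H; nra.
have [d d0 Hd] := cont0 eps0 cx e0.
pose t := Num.min d eps / 2.
have t0 : 0 < t by rewrite divr_gt0 // lt_min d0 eps0.
have td : t < d.
  have : Num.min d eps <= d by rewrite ge_min lexx.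
  rewrite /t; lra.
have te : t < eps.
  have : Num.min d eps <= eps by rewrite ge_min lexx orbT.
  rewrite /t; lra.
have Ht : 0 < t < eps by rewrite t0 te.
have Hx i j : `|x t i j - x 0 i j| <= e by apply: ltW; apply: Hd => //; exact: ltW.
have Hx' i j : `|x 0 i j - x t i j| <= e by rewrite distrC.
have [Hinj Hvt] := Hvert t Ht.
have Hxt i j : `|x t i j| <= C0 + 1.
  have := ler_normD (x t i j - x 0 i j) (x 0 i j); rewrite subrK.
  have := Hx i j; have := C0b i j; lra.
have [yt Fyt yyt] := shadow Fy Hx'.
pose Vj := V t j0.
pose z := yt + th *: (yt - Vj).
have byt j : `|(yt - Vj) ord0 j| <= C1.
  rewrite !mxE; have := ler_normB (yt ord0 j) (x t j0 j).
  have := coord_conv_bound Fyt Hxt j; have := Hxt j0 j; rewrite /C1; lra.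
have ayt : b - Aa * e <= dotv a yt.
  have := dotv_abs a yyt; rewrite dotvBr ay -/Aa => H.
  have := ler_norm (b - dotv a yt); lra.
have aVj : dotv a Vj <= b - g + Aa * e.
  have H : forall j, `|(Vj - V 0 j0) ord0 j| <= e by move=> j; rewrite !mxE.
  have := dotv_abs a H; rewrite dotvBr -/Aa => H2.
  have := ler_norm (dotv a Vj - dotv a (V 0 j0)); rewrite /g; lra.
have FtB v : convI I (x t) v -> dotv a v <= b + Aa * e.
  move=> Fv; have [q Fq vq] := shadow Fv Hx.
  have := dotv_abs a vq; rewrite dotvBr -/Aa => H.
  have := ler_norm (dotv a v - dotv a q); have := Gle _ Fq; lra.
have zout : ~ convI I (x t) z.
  move=> /FtB; rewrite /z dotvDr dotvZr dotvBr => H.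
  have H1 : th * (g - 2 * Aa * e) <= th * (dotv a yt - dotv a Vj) by apply: ler_wpM2l; [exact: ltW | lra].
  have H2 : th * (Aa * e) <= Aa * e by apply: ler_piMl; [exact: mulr_ge0 Aa0 (ltW e0) | exact: th1].
  nra.
have [p Fp Hp] := nearest (x t) z (ex_intro _ j0 j0I).
pose c := z - p.
have Hc i : i \in I -> dotv c (row i (x t)) <= dotv c p.
  move=> iI; have := nearest_var Fp Hp (row_in_conv (x t) iI).
  by rewrite dotvBr subr_le0.
pose K' := [set i in I | dotv c (row i (x t)) == dotv c p].
have [_ EK] := convI_argmax Hc.
have pK : convI K' (x t) p by rewrite /K' EK; split.
have faceK : is_face (convI K' (x t)) (convI [set: 'I_r]%SET (x t)).
  exact: face_lift Hinj Hvt (HF t Ht) Hc.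
have [k hk] := has_dim_exists pK.
have Hs s : 0 < s < eps -> is_face (convI K' (x s)) (convI [set: 'I_r]%SET (x s)).
  by move=> Hs; have [] := Hstab K' k t Ht faceK hk s Hs.
have zp : z != p by apply/eqP => zp; apply: zout; rewrite zp.
have cc0 : 0 < dotv c c.
  rewrite lt_neqAle dotv_ge0 andbT; apply/eqP => E.
  by move/eqP: zp; apply; apply/eqP; rewrite -subr_eq0; apply/eqP/dotv_eq0; rewrite -E.
have [i1 i1I i1K] : exists2 i1, i1 \in I & i1 \notin K'.
  apply: contrapT => Hn.
  have sub : I \subset K'.
    apply/fintype.subsetP => i iI; apply: contrapT => /negP iK; apply: Hn; by exists i.
  have onH v : convI I (x t) v -> dotv c v = dotv c p.
    by move=> /(convI_sub sub); rewrite /K' EK => -[].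
  have h1 := onH _ Fyt.
  have h2 := onH _ (row_in_conv (x t) j0I).
  have : dotv c z = dotv c p.
    rewrite /z dotvDr dotvZr dotvBr h1.
    by rewrite /Vj /V h2 subrr mulr0 addr0.
  move/eqP; rewrite -subr_eq0 -dotvBr -/c => /eqP cc; by move: cc0; rewrite cc ltxx.
have FamK : Fam K'.
  move=> s Hs'; split.
    apply: face_restrict (Hs s Hs') _ _.
      by apply: convI_sub; apply/fintype.subsetP => i; rewrite inE => /andP [].
    by apply: convI_sub; apply/fintype.subsetP => i; rewrite inE.
  move=> E; have [Hinjs Hvs] := Hvert s Hs'.
  have : convI I (x s) (row i1 (x s)) by exact: row_in_conv.
  by rewrite -E; apply: vertex_notin Hinjs Hvs i1K.
have [q Kq pq] := shadow pK Hx.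
have := Hde K' FamK q Kq.
apply/negP; rewrite -ltNge.
have E1 : y - q = (y - z) + ((z - p) + (p - q)).
  by rewrite [(z - p) + _]addrA subrK [RHS]addrA subrK.
have Ezy : z - yt = th *: (yt - Vj) by rewrite /z addrAC subrr add0r.
have Eyz : y - z = (y - yt) - th *: (yt - Vj) by rewrite /z opprD addrA.
have nn0 : 0 <= (n%:R : R) by rewrite ler0n.
have B1 : Nn (z - p) <= n%:R * (th * C1) ^+ 2.
  apply: le_trans (Hp _ Fyt) _; rewrite Ezy; apply: dotv_bound => j.
  by rewrite mxE normrM gtr0_norm // ler_wpM2l // ltW.
have B2 : Nn (y - z) <= n%:R * (e + th * C1) ^+ 2.
  rewrite Eyz; apply: dotv_bound => j; rewrite !mxE.
  apply: le_trans (ler_normB _ _) _; apply: lerD.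
    by have := yyt j; rewrite !mxE.
  rewrite normrM gtr0_norm //; apply: ler_wpM2l; [exact: ltW | by have := byt j; rewrite !mxE].
have B3 : Nn (p - q) <= n%:R * e ^+ 2 by apply: dotv_bound.
have T1 := dotv_tri (y - z) ((z - p) + (p - q)).
have T2 := dotv_tri (z - p) (p - q).
rewrite /Nn E1.
have S1 : (e + th * C1) ^+ 2 <= th ^+ 2 * (1 + C1) ^+ 2.
  rewrite -exprMn; apply: lerXn2r; rewrite ?nnegrE; nra.
have S2 : e ^+ 2 <= th ^+ 2 by apply: lerXn2r; rewrite ?nnegrE; lra.
have S3 : th ^+ 2 * W0 <= th * W0.
  by rewrite expr2 -mulrA; apply: ler_piMl => //; apply: mulr_ge0 => //; exact: ltW.
have : n%:R * (2 * (e + th * C1) ^+ 2 + 4 * (th * C1) ^+ 2 + 4 * e ^+ 2) <= th ^+ 2 * W0.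
  have -> : th ^+ 2 * W0 = n%:R * (2 * (th ^+ 2 * (1 + C1) ^+ 2) + 4 * (th * C1) ^+ 2 + 4 * th ^+ 2).
    rewrite /W0 /C1; ring.
  apply: ler_wpM2l => //.
  set u1 := (e + th * C1) ^+ 2 in S1 *; set u2 := th ^+ 2 * (1 + C1) ^+ 2 in S1 *.
  set u3 := e ^+ 2 in S2 *; set u4 := th ^+ 2 in S2 *.
  lra.
move=> H; rewrite /Nn in T1 T2 B1 B2 B3 *.
set N0 := dotv (y - z + (z - p + (p - q))) _ in T1 *.
set N1 := dotv (y - z) (y - z) in T1 B2.
set N2 := dotv (z - p + (p - q)) _ in T1 T2.
set N3 := dotv (z - p) (z - p) in T2 B1.
set N4 := dotv (p - q) (p - q) in T2 B3.
set X1 := (e + th * C1) ^+ 2 in B2 H.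
set X2 := (th * C1) ^+ 2 in B1 H.
set X3 := e ^+ 2 in B3 H.
set Y := th ^+ 2 * W0 in H S3.
have : n%:R * (2 * X1 + 4 * X2 + 4 * X3) = 2 * (n%:R * X1) + 4 * (n%:R * X2) + 4 * (n%:R * X3) by ring.
lra.
Qed.
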